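(* Let $P(x)=a_nx^n+\cdots+a_1x$ be a nonconstant polynomial with nonnegative integer coefficients, $a_n\ne0$, and content $\gcd(a_n,\dots,a_1)=1$. Let $(a,b)\in\mathbb{N}^2$, and for $1\le t<a$ set $d_t=\dfrac{P(a)}{\gcd(P(a),P(t))}$ and $\mathscr{L}_P(a)=\operatorname{lcm}\{d_t:1\le t<a\}$. If $\gcd(b,\mathscr{L}_P(a))=1$, then \[ \frac{b\,P(t)}{P(a)}\notin\mathbb{Z}\quad\text{for all integers } 1\le t<a, \] and hence $(a,b)$ is $\mathcal{F}(a_n,\dots,a_1)$-visible.
   Context: $\mathbb{N}$ denotes the positive integers; $\operatorname{lcm}$ of the empty set is $1$. The family $\mathcal{F}(a_n,\dots,a_1)=\{y=q(a_nx^n+\cdots+a_1x): q\in\mathbb{Q}^+\}$. A point $(r,s)\in\mathbb{N}^2$ is $\mathcal{F}(a_n,\dots,a_1)$-visible if there is $q\in\mathbb{Q}^+$ with $s=q(a_nr^n+\cdots+a_1r)$ and no other point of $\mathbb{N}^2$ lies on the curve $y=q(a_nx^n+\cdots+a_1x)$ between the origin and $(r,s)$. *)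

(* Defs.v *)
From HB Require Import structures.
From mathcomp Require Import all_boot all_order all_algebra.
Set Implicit Arguments. Unset Strict Implicit. Unset Printing Implicit Defensive.
Import Order.TTheory GRing.Theory Num.Theory.
Local Open Scope ring_scope.

(* The polynomial P(x) = a_n x^n + ... + a_1 x is represented by P : {poly int}
   with P`_0 = 0.  Evaluation at a natural number r, cast into the rationals. *)
Definition evalQ (P : {poly int}) (r : nat) : rat := (P.[r%:Z])%:~R.

Definition content_pos (P : {poly int}) : nat :=
  \big[gcdn/0%N]_(1 <= i < size P) absz P`_i.

Definition dP (P : {poly int}) (a t : nat) : nat :=
  (absz P.[a%:Z] %/ gcdn (absz P.[a%:Z]) (absz P.[t%:Z]))%N.

Definition LP (P : {poly int}) (a : nat) : nat :=
  \big[lcmn/1%N]_(1 <= t < a) dP P a t.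

(* (r,s) in N^2 (positive integers) is F(a_n,...,a_1)-visible: there is q in Q^+
   with s = q P(r), and no other point (r',s') of N^2 lies on y = q P(x) between
   the origin and (r,s), i.e. with 0 < r' < r. *)
Definition visible (P : {poly int}) (r s : nat) : Prop :=
  (0 < r)%N /\ (0 < s)%N /\
  exists q : rat, 0 < q /\ s%:R = q * evalQ P r /\
    forall r' s' : nat, (0 < r')%N -> (0 < s')%N -> (r' < r)%N ->
      s'%:R <> q * evalQ P r'.

(* Main.v *)
Require Import Defs.
From HB Require Import structures.
From mathcomp Require Import all_boot all_order all_algebra.
From mathcomp Require Import zify.
Import Order.TTheory GRing.Theory Num.Theory.
Local Open Scope ring_scope.
Lemma Pmono {P : {poly int}} : (2 <= size P)%N -> (forall i, 0 <= P`_i) ->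
  forall t a : int, 0 <= t -> t < a -> P.[t] < P.[a].
Proof.
move=> Hs Hc t a t0 ta.
have [m Hm] : exists m, size P = m.+2 by exists (size P).-2; rewrite -!subn1 -subnDA; lia.
have lc : 0 < P`_m.+1.
  rewrite lt_def Hc andbT; have := lead_coef_eq0 P; rewrite /lead_coef Hm /= => ->.
  by rewrite -size_poly_eq0 Hm.
rewrite !horner_coef Hm [X in X < _]big_ord_recr [X in _ < X]big_ord_recr /=.
apply: ler_ltD.
  apply: ler_sum => i _; apply: ler_wpM2l => //; apply: lerXn2r; rewrite ?nnegrE //.
  by apply: le_trans (ltW ta). by apply: ltW.
rewrite ltr_pM2l //; apply: ltrXn2r => //; rewrite ?nnegrE //; by apply: le_trans (ltW ta).
Qed.

Lemma dP_dvd_LP P a t : (1 <= t < a)%N -> (dP P a t %| LP P a)%N.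
Proof.
move=> ht; rewrite /LP (big_rem t) ?mem_index_iota //=.
exact: dvdn_lcml.
Qed.

Theorem theorem3p6 (P : {poly int}) (a b : nat) :
  (2 <= size P)%N ->                       (* nonconstant, a_n = lead_coef P <> 0 *)
  P`_0 = 0 ->                              (* no constant term *)
  (forall i, 0 <= P`_i) ->                 (* nonnegative integer coefficients *)
  content_pos P = 1%N ->                   (* gcd(a_n, ..., a_1) = 1 *)
  (0 < a)%N -> (0 < b)%N ->                (* (a,b) in N^2 *)
  coprime b (LP P a) ->
  (forall t : nat, (1 <= t < a)%N ->
     (b%:R * evalQ P t / evalQ P a) \isn't a Num.int) /\
  visible P a b.
Proof.
move=> Hs H0 Hc _ a0 b0 Hcop.
have Ppos : forall t : nat, (0 < t)%N -> 0 < P.[t%:Z].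
  move=> t t0; have := @Pmono P Hs Hc 0 t%:Z (lexx _).
  rewrite horner_coef0 H0 ltz_nat; exact.
have part1 : forall t : nat, (1 <= t < a)%N ->
     (b%:R * evalQ P t / evalQ P a) \isn't a Num.int.
  move=> t /andP [t1 ta]; apply/negP => /intrP [z Hz].
  have TA : P.[t%:Z] < P.[a%:Z] by apply: Pmono => //; rewrite ltz_nat.
  have T0 := Ppos t t1.
  have A0 : 0 < P.[a%:Z] by apply: lt_trans TA.
  have eq1 : b%:Z * P.[t%:Z] = z * P.[a%:Z].
    apply/eqP; rewrite -(eqr_int rat) !rmorphM /=; apply/eqP.
    move: Hz; rewrite /evalQ => /(congr1 (fun x => x * P.[a%:Z]%:~R)); rewrite divfK ?intr_eq0 ?gt_eqF // => ->; by rewrite pmulrn intrM.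
  set nA := `|P.[a%:Z]|%N. set nT := `|P.[t%:Z]|%N.
  have eA : nA%:Z = P.[a%:Z] by rewrite gez0_abs // ltW.
  have eT : nT%:Z = P.[t%:Z] by rewrite gez0_abs // ltW.
  have nT0 : (0 < nT)%N by rewrite -ltz_nat eT.
  have nTA : (nT < nA)%N by rewrite -ltz_nat eT eA.
  have eq2 : (b * nT = `|z| * nA)%N.
    by have := congr1 absz eq1; rewrite !abszM absz_nat.
  set g := gcdn nA nT.
  have g0 : (0 < g)%N by rewrite gcdn_gt0 nT0 orbT.
  have hd : (dP P a t * g = nA)%N by rewrite /dP -/nA -/nT divnK // dvdn_gcdl.
  have h1 : (nA %| b * g)%N.
    rewrite /g gcdnC muln_gcdr dvdn_gcd; apply/andP; split.
      by rewrite eq2 dvdn_mull.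
    exact: dvdn_mull.
  have h2 : (dP P a t %| b)%N by rewrite -(dvdn_pmul2r g0) hd.
  have h3 : coprime (dP P a t) (dP P a t).
    apply: (coprime_dvdl h2); apply: (coprime_dvdr _ Hcop); apply: dP_dvd_LP.
    by rewrite t1.
  rewrite /coprime gcdnn in h3; move: hd; rewrite (eqP h3) mul1n => hg.
  have : (nA %| nT)%N by rewrite -hg dvdn_gcdr.
  by move/(dvdn_leq nT0); rewrite leqNgt nTA.
split => //.
have eA0 : 0 < evalQ P a by rewrite /evalQ ltr0z Ppos.
split => //; split => //.
exists (b%:R / evalQ P a); split; first by rewrite divr_gt0 // ltr0n.
split; first by rewrite divfK // gt_eqF.
move=> r s r0 s0 ra hs.
have := part1 r; rewrite r0 ra => /(_ isT); by rewrite mulrAC -hs natr_int.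
Qed.
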